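(* Consider the dynamic pricing data structure described in the context, and let $d_{\max}$ be the largest degree of any vertex of the current graph $W$. Then the running time of $\textsc{InsEdge}$ is in $\mathcal{O}(1)$, of $\textsc{DelEdge}$ is in $\mathcal{O}(d_{\max})$, of $\textsc{DecWeight}$ is in $\mathcal{O}(d_{\max}^2)$, and of $\textsc{IncWeight}$ is in $\mathcal{O}(d_{\max})$.
   Context: Let $W$ be a finite simple undirected graph with vertex weights $w:V(W)\to\mathbb{R}_{\ge0}$, stored with adjacency lists; each edge $e$ carries a price $p(e)$ and a set $C\subseteq V(W)$ is maintained. For a vertex $v$, $\delta(v)$ is the set of edges incident to $v$ and $s(v)=\sum_{e\in\delta(v)}p(e)$ (the value $s(v)$ is stored for each vertex). $v$ is tight if $s(v)=w(v)$. Procedures: $\textsc{Update}(F)$: for each $e=\{u,v\}\in F$ in turn, if $u$ or $v$ is tight skip $e$; otherwise increase $p(e)$ until $u$ or $v$ is tight and add the newly tight vertices to $C$. $\textsc{InsEdge}(e_n=\{u,v\})$: add $e_n$ to $E(W)$ with $p(e_n)=0$; call $\textsc{Update}(\{e_n\})$. $\textsc{DelEdge}(e_d=\{u,v\})$: remove $e_d$ from $E(W)$ and update $s(u),s(v)$; set $C\gets C\setminus\{u,v\}$; let $F=\{\{x,y\}\in E(W)\mid y\in\{u,v\},\ x\text{ not tight}\}$; call $\textsc{Update}(F)$. $\textsc{DecWeight}(v,w_n)$: set $w(v)\gets w_n$; $C\gets C\setminus\{v\}$; $F\gets\emptyset$; for each $e=\{v,x\}\in\delta(v)$: set $p(e)\gets0$,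 and if $x$ is not tight then $C\gets C\setminus\{x\}$ and $F\gets F\cup\{\{x,y\}\in E(W)\mid y\text{ not tight}\}\cup\{e\}$; finally call $\textsc{Update}(F)$. $\textsc{IncWeight}(v,w_n)$: set $w(v)\gets w_n$; if $v\in C$, set $C\gets C\setminus\{v\}$, let $F=\{\{x,v\}\in E(W)\mid x\text{ not tight}\}$ and call $\textsc{Update}(F)$. *)

(* Defs.v *)
(* An explicit, step-counting model of the dynamic pricing
   data structure: every operation returns the new state together with the
   number of elementary steps it performed (unit cost per constant-time block,
   per adjacency-list entry scanned, and per edge handled by Update). *)
From HB Require Import structures.
From mathcomp Require Import all_boot all_order all_algebra.
Set Implicit Arguments. Unset Strict Implicit. Unset Printing Implicit Defensive.
Import Order.TTheory GRing.Theory Num.Theory.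
Local Open Scope ring_scope.

Section Pricing.
Variables (R : realFieldType) (V : finType).

(* adjacency lists, edge prices (symmetric, p u v = p v u = p({u,v})),
   vertex weights, stored sums s(v), and the set C *)
Record state := State {
  adj : V -> seq V;
  price : V -> V -> R;
  wt : V -> R;
  sv : V -> R;
  cov : {set V} }.

Definition upd {X : Type} (f : V -> X) (v : V) (a : X) : V -> X :=
  fun x => if x == v then a else f x.

Definition set_adj st a := State a (price st) (wt st) (sv st) (cov st).
Definition set_price st p := State (adj st) p (wt st) (sv st) (cov st).
Definition set_wt st w := State (adj st) (price st) w (sv st) (cov st).
Definition set_sv st s := State (adj st) (price st) (wt st) s (cov st).
Definition set_cov st C := State (adj st) (price st) (wt st) (sv st) C.

Definition set_edge_price st u v (a : R) :=
  set_price st (fun x y => if ((x == u) && (y == v)) || ((x == v) && (y == u))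
                           then a else price st x y).

Definition tight st v : bool := sv st v == wt st v.

Definition deg st v : nat := size (adj st v).
Definition dmax st : nat := (\max_(v : V) deg st v)%N.

Definition update_edge (st : state) (e : V * V) : state * nat :=
  let: (u, v) := e in
  if tight st u || tight st v then (st, 1%N) else
  let d := Num.min (wt st u - sv st u) (wt st v - sv st v) in
  let st1 := set_edge_price st u v (price st u v + d) in
  let st2 := set_sv st1 (upd (upd (sv st1) u (sv st1 u + d)) v (sv st1 v + d)) in
  let st3 := set_cov st2 (cov st2 :|: [set x in [:: u; v] | tight st2 x]) in
  (st3, 1%N).

Fixpoint Update (st : state) (F : seq (V * V)) : state * nat :=
  match F with
  | [::] => (st, 1%N)
  | e :: F' => let: (st1, c1) := update_edge st e in
               let: (st2, c2) := Update st1 F' in (st2, (c1 + c2)%N)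
  end.

Definition InsEdge (st : state) (u v : V) : state * nat :=
  let st1 := set_adj st (upd (upd (adj st) u (v :: adj st u)) v (u :: adj st v)) in
  let st2 := set_edge_price st1 u v 0 in
  let: (st3, c) := Update st2 [:: (u, v)] in (st3, (1 + c)%N).

Definition DelEdge (st : state) (u v : V) : state * nat :=
  let pe := price st u v in
  (* removal from the two adjacency lists: scanning costs their lengths *)
  let c0 := (deg st u + deg st v)%N in
  let st1 := set_adj st (upd (upd (adj st) u (rem v (adj st u))) v (rem u (adj st v))) in
  let st2 := set_edge_price st1 u v 0 in
  let st3 := set_sv st2 (upd (upd (sv st2) u (sv st2 u - pe)) v (sv st2 v - pe)) in
  let st4 := set_cov st3 (cov st3 :\ u :\ v) in
  let F := [seq (x, y) | y <- [:: u; v], x <- [seq x <- adj st4 y | ~~ tight st4 x]] in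
  let c1 := (deg st4 u + deg st4 v)%N in
  let: (st5, c2) := Update st4 F in (st5, (1 + c0 + c1 + c2)%N).

Fixpoint decweight_loop (v : V) (st : state) (xs : seq V) (F : seq (V * V))
  : state * seq (V * V) * nat :=
  match xs with
  | [::] => (st, F, 1%N)
  | x :: xs' =>
    let pe := price st v x in
    let st1 := set_edge_price st v x 0 in
    let st2 := set_sv st1 (upd (upd (sv st1) v (sv st1 v - pe)) x (sv st1 x - pe)) in
    let: (st3, F1, c) :=
      if ~~ tight st2 x then
        (set_cov st2 (cov st2 :\ x),
         F ++ [seq (x, y) | y <- [seq y <- adj st2 x | ~~ tight st2 y]] ++ [:: (v, x)],
         (1 + deg st2 x)%N)
      else (st2, F, 1%N) in
    let: (st4, F2, c') := decweight_loop v st3 xs' F1 in (st4, F2, (c + c')%N)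
  end.

Definition DecWeight (st : state) (v : V) (wn : R) : state * nat :=
  let st1 := set_wt st (upd (wt st) v wn) in
  let st2 := set_cov st1 (cov st1 :\ v) in
  let: (st3, F, c1) := decweight_loop v st2 (adj st2 v) [::] in
  let: (st4, c2) := Update st3 F in (st4, (1 + c1 + c2)%N).

Definition IncWeight (st : state) (v : V) (wn : R) : state * nat :=
  let st1 := set_wt st (upd (wt st) v wn) in
  if v \in cov st1 then
    let st2 := set_cov st1 (cov st1 :\ v) in
    let F := [seq (x, v) | x <- [seq x <- adj st2 v | ~~ tight st2 x]] in
    let: (st3, c) := Update st2 F in (st3, (1 + deg st2 v + c)%N)
  else (st1, 1%N).

Definition wf_state (st : state) : Prop :=
  [/\ forall u v, (v \in adj st u) = (u \in adj st v),
      forall v, v \notin adj st v,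
      forall v, uniq (adj st v) &
      forall v, 0 <= wt st v].

End Pricing.

Definition cost {R : realFieldType} {V : finType} (r : state R V * nat) : nat := r.2.

(* Main.v *)
Require Import Defs.
From mathcomp Require Import all_boot all_order all_algebra.
Import Order.TTheory GRing.Theory Num.Theory.
Local Open Scope ring_scope.
From mathcomp Require Import zify.

Section L.
Variables (R : realFieldType) (V : finType).

Lemma update_edge_cost (st : state R V) e : (update_edge st e).2 = 1%N.
Proof. by case: e => u v; rewrite /update_edge; case: ifP. Qed.

Lemma Update_cost (F : seq (V*V)) : forall (st : state R V), (Update st F).2 = (size F).+1.
Proof.
elim: F => [//|e F IH] st /=.
have := update_edge_cost st e.
case: (update_edge st e) => st1 c1 /= ->.
have := IH st1; case: (Update st1 F) => st2 c2 /= -> //.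
Qed.

Lemma deg_dmax (st : state R V) v : (deg st v <= dmax st)%N.
Proof. rewrite /dmax. exact: (leq_bigmax v). Qed.

Lemma loop_bound v (A : V -> seq V) d (xs : seq V) :
  (forall x, x \in xs -> (size (A x) <= d)%N) ->
  forall (st : state R V) F, adj st = A ->
  let r := decweight_loop v st xs F in
  [/\ adj r.1.1 = A, (size r.1.2 <= size F + size xs * d.+1)%N &
      (r.2 <= 1 + size xs * d.+1)%N].
Proof.
elim: xs => [|x xs IH] Hd st F HA /=; first by rewrite addn0.
have Hx : (size (A x) <= d)%N by apply: Hd; rewrite inE eqxx.
have Hd' : forall y, y \in xs -> (size (A y) <= d)%N.
  by move=> y hy; apply: Hd; rewrite inE hy orbT.
set st2 := set_sv _ _.
have HA2 : adj st2 = A by [].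
case: ifP => _.
- set F1 := (F ++ _).
  have := IH Hd' (set_cov st2 (cov st2 :\ x)) F1 HA2.
  case: (decweight_loop v _ xs F1) => [[st4 F2] c'] /= [H1 H2 H3]; split => //.
  + apply: (leq_trans H2). rewrite /F1 !size_cat /= size_map.
    have : (size [seq y <- adj st x | ~~ tight st2 y] <= d)%N.
      by rewrite size_filter; apply: leq_trans (count_size _ _) _; rewrite HA.
    rewrite mulSn. lia.
  + rewrite /deg /= HA mulSn. lia.
- have := IH Hd' st2 F HA2.
  case: (decweight_loop v _ xs F) => [[st4 F2] c'] /= [H1 H2 H3]; split => //.
  + apply: (leq_trans H2). rewrite mulSn. lia.
  + rewrite mulSn. lia.
Qed.
End L.
Arguments Update_cost {R V}.
Arguments deg_dmax {R V}.
Arguments loop_bound {R V}.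

Theorem theorem2 :
  exists c : nat,
  forall (R : realFieldType) (V : finType) (st : state R V),
    wf_state st ->
    [/\ (forall u v : V, u != v -> v \notin adj st u ->
           (cost (InsEdge st u v) <= c)%N),
        (forall u v : V, v \in adj st u ->
           (cost (DelEdge st u v) <= c * (dmax st).+1)%N),
        (forall (v : V) (wn : R), 0 <= wn -> wn <= wt st v ->
           (cost (DecWeight st v wn) <= c * ((dmax st) ^ 2).+1)%N) &
        (forall (v : V) (wn : R), wt st v <= wn ->
           (cost (IncWeight st v wn) <= c * (dmax st).+1)%N)].
Proof.
exists 10%N => R V st _; split.
- move=> u v _ _; rewrite /cost /InsEdge.
  set st2 := set_edge_price _ _ _ _.
  have := Update_cost [:: (u, v)] st2.
  case: (Update st2 _) => st3 c /= -> //.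
- move=> u v _; rewrite /cost /DelEdge.
  set st4 := set_cov _ _. set F := [seq _ | y <- _, x <- _].
  have := Update_cost F st4.
  case: (Update st4 F) => st5 c /= ->.
  have hu := deg_dmax st u; have hv := deg_dmax st v.
  have h4 : forall y, (deg st4 y <= dmax st)%N.
    move=> y; rewrite /deg /st4 /= /upd.
    by case: ifP => _; [|case: ifP => _];
      try apply: leq_trans (size_subseq (rem_subseq _ _)) (deg_dmax st _);
      exact: deg_dmax.
  have hF : (size F <= deg st4 u + deg st4 v)%N.
    rewrite /F; clearbody st4; rewrite /= size_cat !size_map cats0 ?size_map !size_filter.
    rewrite /deg; have := count_size (fun x => ~~ tight st4 x) (adj st4 u);
    have := count_size (fun x => ~~ tight st4 x) (adj st4 v). lia.
  have := h4 u; have := h4 v. lia.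
- move=> v wn _ _; rewrite /cost /DecWeight.
  set st2 := set_cov _ _.
  have := loop_bound v (adj st) (dmax st) (adj st2 v)
    (fun x _ => deg_dmax st x) st2 [::] erefl.
  case: (decweight_loop v st2 (adj st2 v) [::]) => [[st3 F] c1] /= [_ hF hc].
  have := Update_cost F st3; case: (Update st3 F) => st4 c2 /= ->.
  have hk : (size (adj st v) <= dmax st)%N := deg_dmax st v.
  have hm : (size (adj st v) * (dmax st).+1 <= dmax st * (dmax st).+1)%N.
    by rewrite leq_mul2r hk orbT.
  rewrite expnS expn1. nia.
- move=> v wn _; rewrite /cost /IncWeight.
  case: ifP => _; last by rewrite /=.
  set st2 := set_cov _ _. set F := [seq _ | x <- _].
  have := Update_cost F st2; case: (Update st2 F) => st3 c /= ->.
  have hF : (size F <= deg st2 v)%N.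
    by rewrite /F size_map size_filter count_size.
  have := deg_dmax st v. rewrite /deg /= in hF *. lia.
Qed.
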